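(* A set $S\subseteq\mathbb Z$ is $a$-nice for some $a\in\mathbb Z$ if and only if the following three conditions hold: (1) if $b\in S$ then $b-n\in S$; (2) $|S\cap\mathbb Z_{>0}|<\infty$; (3) $|\mathbb Z_{<0}\setminus S|<\infty$.
   Context: $\hat S_n$ is the affine symmetric group with generators $s_0,\dots,s_{n-1}$ (indices mod $n$). It acts on $\mathbb Z$ by $s_i(a)=a+1$ if $a\equiv i\pmod n$, $s_i(a)=a-1$ if $a\equiv i+1\pmod n$, and $s_i(a)=a$ otherwise; this induces an action on subsets of $\mathbb Z$. Let $\mathbb Z_{\le a}=\{b\in\mathbb Z: b\le a\}$. A subset $S\subseteq\mathbb Z$ is $a$-nice if $S=w(\mathbb Z_{\le a})$ for some $w\in\hat S_n$. *)

(* Defs.v *)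
From Stdlib Require Import ZArith List.
Open Scope Z_scope.

Definition s_act (n i a : Z) : Z :=
  if Z.eqb (a mod n) (i mod n) then a + 1
  else if Z.eqb (a mod n) ((i + 1) mod n) then a - 1
  else a.

(* A word [i1; ...; ik] in the generators acts as s_{i1} o ... o s_{ik}.
   Since each s_i is an involution, the group \hat S_n generated by the
   s_i consists exactly of the actions of such words. *)
Definition word_act (n : Z) (w : list Z) (a : Z) : Z :=
  fold_right (fun i x => s_act n i x) a w.

Definition valid_word (n : Z) (w : list Z) : Prop :=
  Forall (fun i => 0 <= i < n) w.

Definition Zle_set (a : Z) : Z -> Prop := fun b => b <= a.

Definition word_image (n : Z) (w : list Z) (T : Z -> Prop) : Z -> Prop :=
  fun y => exists x, T x /\ word_act n w x = y.

Definition nice (n a : Z) (S : Z -> Prop) : Prop :=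
  exists w, valid_word n w /\ forall y, S y <-> word_image n w (Zle_set a) y.

Definition finite_set (P : Z -> Prop) : Prop :=
  exists l : list Z, forall x, P x -> In x l.

(* Main.v *)
Require Import Defs.
From Stdlib Require Import ZArith List Lia Classical IndefiniteDescription.
Open Scope Z_scope.

Lemma mod_succ n a : 0 < n -> (a+1) mod n = if a mod n =? n-1 then 0 else a mod n + 1.
Proof.
  intros Hn. pose proof (Z.mod_pos_bound a n Hn). pose proof (Z.div_mod a n ltac:(lia)).
  destruct (Z.eqb_spec (a mod n) (n-1)).
  - symmetry; apply Z.mod_unique with (q := a/n + 1); nia.
  - symmetry; apply Z.mod_unique with (q := a/n); nia.
Qed.

Lemma mod_pred n a : 0 < n -> (a-1) mod n = if a mod n =? 0 then n-1 else a mod n - 1.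
Proof.
  intros Hn. pose proof (Z.mod_pos_bound a n Hn). pose proof (Z.div_mod a n ltac:(lia)).
  destruct (Z.eqb_spec (a mod n) 0).
  - symmetry; apply Z.mod_unique with (q := a/n - 1); nia.
  - symmetry; apply Z.mod_unique with (q := a/n); nia.
Qed.

Lemma s_inv n i a : 2 <= n -> s_act n i (s_act n i a) = a.
Proof.
  intros Hn. unfold s_act.
  pose proof (mod_succ n a ltac:(lia)). pose proof (mod_pred n a ltac:(lia)).
  pose proof (mod_succ n i ltac:(lia)).
  pose proof (Z.mod_pos_bound a n ltac:(lia)). pose proof (Z.mod_pos_bound i n ltac:(lia)).
  destruct (Z.eqb_spec (a mod n) (i mod n)).
  - rewrite H. destruct (Z.eqb_spec (a mod n) (n-1));
    destruct (Z.eqb_spec (i mod n) (n-1)); rewrite H1 in *;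
    repeat match goal with |- context [Z.eqb ?x ?y] => destruct (Z.eqb_spec x y) end; lia.
  - destruct (Z.eqb_spec (a mod n) ((i+1) mod n)).
    + rewrite H0. destruct (Z.eqb_spec (a mod n) 0);
      destruct (Z.eqb_spec (i mod n) (n-1)); rewrite H1 in *;
      repeat match goal with |- context [Z.eqb ?x ?y] => destruct (Z.eqb_spec x y) end; lia.
    + repeat match goal with |- context [Z.eqb ?x ?y] => destruct (Z.eqb_spec x y) end; lia.
Qed.

Lemma s_shift n i b : 0 < n -> s_act n i (b - n) = s_act n i b - n.
Proof.
  intros Hn. unfold s_act.
  replace ((b - n) mod n) with (b mod n).
  2:{ replace (b - n) with (b + (-1)*n) by ring. now rewrite Z_mod_plus_full. }
  repeat match goal with |- context [Z.eqb ?x ?y] => destruct (Z.eqb_spec x y) end; lia.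
Qed.

Lemma s_bound n i b : Z.abs (s_act n i b - b) <= 1.
Proof. unfold s_act;
  repeat match goal with |- context [Z.eqb ?x ?y] => destruct (Z.eqb_spec x y) end; lia.
Qed.

Lemma w_shift n w b : 0 < n -> word_act n w (b - n) = word_act n w b - n.
Proof. intros Hn; induction w; simpl; auto. rewrite IHw. now apply s_shift. Qed.

Lemma w_bound n w b : Z.abs (word_act n w b - b) <= Z.of_nat (length w).
Proof. induction w; simpl. lia. pose proof (s_bound n a (word_act n w b)). lia. Qed.

Lemma w_inv n w b : 2 <= n -> word_act n w (word_act n (rev w) b) = b.
Proof.
  intros Hn. revert b; induction w; intros b; simpl; auto.
  unfold word_act at 2. rewrite fold_right_app. simpl. fold (word_act n (rev w) (s_act n a b)).
  rewrite IHw. now apply s_inv.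
Qed.

Lemma finite_interval lo hi : finite_set (fun b => lo <= b <= hi).
Proof.
  exists (map (fun k => lo + Z.of_nat k) (seq 0 (Z.to_nat (hi - lo + 1)))).
  intros x Hx. apply in_map_iff. exists (Z.to_nat (x - lo)). split. lia.
  apply in_seq. lia.
Qed.

Lemma finite_mono (P Q : Z -> Prop) : (forall x, P x -> Q x) -> finite_set Q -> finite_set P.
Proof. intros H [l Hl]. exists l; auto. Qed.

Lemma forward n (hn : 2 <= n) S a : nice n a S ->
  ((forall b, S b -> S (b - n)) /\
   finite_set (fun b => S b /\ 0 < b) /\
   finite_set (fun b => b < 0 /\ ~ S b)).
Proof.
  intros [w [Hv HS]]. set (L := Z.of_nat (length w)).
  split; [|split].
  - intros b Hb. apply HS in Hb. destruct Hb as [x [Hx Hw]]. apply HS.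
    exists (x - n). unfold Zle_set in *. split. lia. rewrite w_shift by lia. lia.
  - apply finite_mono with (Q := fun b => 0 <= b <= a + L); [|apply finite_interval].
    intros b [Hb Hp]. apply HS in Hb. destruct Hb as [x [Hx Hw]]. unfold Zle_set in Hx.
    pose proof (w_bound n w x). fold L in H. lia.
  - apply finite_mono with (Q := fun b => a - L <= b <= 0); [|apply finite_interval].
    intros b [Hb Hp]. set (x := word_act n (rev w) b).
    pose proof (w_bound n (rev w) b). rewrite length_rev in H. fold L x in H.
    assert (x > a). { destruct (Z_le_gt_dec x a); auto. exfalso. apply Hp, HS.
      exists x. split. exact l. apply w_inv; lia. }
    lia.
Qed.

Fixpoint sumsq (m : Z -> Z) (k : nat) : Z :=
  match k with O => 0 | S k => sumsq m k + m (Z.of_nat k) * m (Z.of_nat k) end.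

Definition upd (f : Z -> Z) p v := fun x => if x =? p then v else f x.

Lemma sumsq_nonneg m k : 0 <= sumsq m k.
Proof. induction k; simpl; nia. Qed.

Lemma sumsq_upd f p v k : 0 <= p ->
  sumsq (upd f p v) k = sumsq f k + (if p <? Z.of_nat k then v*v - f p * f p else 0).
Proof.
  intros Hp. induction k. simpl. destruct (Z.ltb_spec p 0); lia.
  change (sumsq (upd f p v) (S k)) with (sumsq (upd f p v) k + upd f p v (Z.of_nat k) * upd f p v (Z.of_nat k)).
  change (sumsq f (S k)) with (sumsq f k + f (Z.of_nat k) * f (Z.of_nat k)).
  rewrite IHk. unfold upd.
  destruct (Z.eqb_spec (Z.of_nat k) p);
  destruct (Z.ltb_spec p (Z.of_nat k)); destruct (Z.ltb_spec p (Z.of_nat (S k))); subst; try lia.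
Qed.

Lemma max_range (m : Z -> Z) k : (0 < k)%nat ->
  exists r0, 0 <= r0 < Z.of_nat k /\ forall r, 0 <= r < Z.of_nat k -> m r <= m r0.
Proof.
  induction k; intros H. lia. destruct k.
  - exists 0. split. lia. intros r Hr. replace r with 0 by lia. lia.
  - destruct IHk as [r0 [H1 H2]]. lia.
    destruct (Z_le_gt_dec (m (Z.of_nat (S k))) (m r0)).
    + exists r0. split. lia. intros r Hr.
      destruct (Z.eq_dec r (Z.of_nat (S k))). subst; lia. apply H2; lia.
    + exists (Z.of_nat (S k)). split. lia. intros r Hr.
      destruct (Z.eq_dec r (Z.of_nat (S k))). subst; lia. specialize (H2 r ltac:(lia)). lia.
Qed.

Lemma down_closed (S : Z -> Prop) a : (forall z, S z -> S (z-1)) -> S a ->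
  forall y, y <= a -> S y.
Proof.
  intros Hd Ha. assert (forall k:nat, forall y, a - y = Z.of_nat k -> S y).
  { induction k; intros y Hy. replace y with a by lia. auto.
    replace y with ((y+1)-1) by lia. apply Hd, IHk. lia. }
  intros y Hy. apply (H (Z.to_nat (a - y))). lia.
Qed.

Lemma main n (hn : 2 <= n) : forall k : nat, forall (m : Z -> Z) (S : Z -> Prop),
  (Z.to_nat (sumsq m (Z.to_nat n)) < k)%nat ->
  (forall r, 0 <= r < n -> m r mod n = r) ->
  (forall y, S y <-> y <= m (y mod n)) ->
  exists a w, valid_word n w /\ forall y, S y <-> word_image n w (Zle_set a) y.
Proof.
  induction k; intros m S Hk Hinv Hrep. lia.
  destruct (classic (forall r, 0 <= r < n -> S (m r - 1))) as [Hall|Hnot].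
  - destruct (max_range m (Z.to_nat n) ltac:(lia)) as [r0 [Hr0 Hmax]].
    rewrite Z2Nat.id in * by lia.
    exists (m r0), nil. split. constructor.
    assert (Hd : forall z, S z -> S (z-1)).
    { intros z Hz. apply Hrep in Hz. set (q := z mod n) in *.
      pose proof (Z.mod_pos_bound z n ltac:(lia)). fold q in H.
      specialize (Hall q H). apply Hrep in Hall. apply Hrep.
      rewrite (mod_pred n (m q)) in Hall by lia. rewrite (mod_pred n z) by lia.
      rewrite (Hinv q H) in Hall. fold q. lia. }
    intros y. split.
    + intros Hy. apply Hrep in Hy. exists y. split; auto. unfold Zle_set.
      pose proof (Z.mod_pos_bound y n ltac:(lia)). specialize (Hmax _ H). lia.
    + intros [x [Hx Hw]]. simpl in Hw. subst. unfold Zle_set in Hx.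
      apply (down_closed S (m r0)); auto. apply Hrep. rewrite Hinv; lia.
  - apply not_all_ex_not in Hnot. destruct Hnot as [r Hr].
    apply imply_to_and in Hr. destruct Hr as [Hr Hns].
    rewrite Hrep in Hns. rewrite (mod_pred n (m r)) in Hns by lia. rewrite (Hinv r Hr) in Hns.
    set (i := if r =? 0 then n - 1 else r - 1) in *.
    assert (Hi : 0 <= i < n) by (unfold i; destruct (Z.eqb_spec r 0); lia).
    assert (Hir : i <> r) by (unfold i; destruct (Z.eqb_spec r 0); lia).
    assert (Hi1 : (i + 1) mod n = r).
    { rewrite mod_succ by lia. rewrite Z.mod_small by lia. unfold i.
      destruct (Z.eqb_spec r 0); repeat match goal with |- context [Z.eqb ?x ?y] => destruct (Z.eqb_spec x y) end; lia. }
    set (m' := upd (upd m i (m r - 1)) r (m i + 1)).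
    assert (Hm'i : m' i = m r - 1).
    { unfold m', upd. destruct (Z.eqb_spec i r); try lia. now rewrite Z.eqb_refl. }
    assert (Hm'r : m' r = m i + 1). { unfold m', upd. now rewrite Z.eqb_refl. }
    assert (Hm'o : forall x, x <> i -> x <> r -> m' x = m x).
    { intros x H1 H2. unfold m', upd. destruct (Z.eqb_spec x r); try lia.
      destruct (Z.eqb_spec x i); lia. }
    set (S' := fun y => S (s_act n i y)).
    destruct (IHk m' S') as [a [w [Hv HS']]].
    + assert (Hs : sumsq m' (Z.to_nat n) = sumsq m (Z.to_nat n) + ((m r - 1) * (m r - 1) - m i * m i) + ((m i + 1) * (m i + 1) - m r * m r)).
      { unfold m'. rewrite !sumsq_upd by lia. rewrite Z2Nat.id by lia.
        destruct (Z.ltb_spec i n); destruct (Z.ltb_spec r n); try lia.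
        unfold upd. destruct (Z.eqb_spec r i); lia. }
      pose proof (sumsq_nonneg m' (Z.to_nat n)) as Hnn. rewrite Hs in *.
      assert (m i + 1 <= m r - 1) by lia.
      assert (E : (m r - 1) * (m r - 1) - m i * m i + ((m i + 1) * (m i + 1) - m r * m r) <= -2) by nia.
      revert E Hk Hnn. generalize (sumsq m (Z.to_nat n)). generalize ((m r - 1) * (m r - 1) - m i * m i). generalize ((m i + 1) * (m i + 1) - m r * m r). intros. lia.
    + intros r' Hr'. destruct (Z.eq_dec r' i); [|destruct (Z.eq_dec r' r)].
      * subst r'. rewrite Hm'i. rewrite mod_pred by lia. rewrite Hinv by lia. reflexivity.
      * subst r'. rewrite Hm'r. rewrite mod_succ by lia. rewrite Hinv by lia.
        rewrite mod_succ in Hi1 by lia. rewrite Z.mod_small in Hi1 by lia. exact Hi1.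
      * rewrite Hm'o by auto. auto.
    + intros y. unfold S'. unfold s_act. rewrite (Z.mod_small i n) by lia. rewrite Hi1.
      pose proof (Z.mod_pos_bound y n ltac:(lia)).
      destruct (Z.eqb_spec (y mod n) i).
      * rewrite Hrep, e, Hm'i. rewrite mod_succ by lia. rewrite e.
        rewrite mod_succ in Hi1 by lia. rewrite Z.mod_small in Hi1 by lia. rewrite Hi1. lia.
      * destruct (Z.eqb_spec (y mod n) r).
        -- rewrite Hrep, e, Hm'r. rewrite mod_pred by lia. rewrite e. fold i. lia.
        -- rewrite Hm'o by auto. apply Hrep.
    + exists a, (i :: w). split. constructor; auto.
      intros y. split.
      * intros Hy. assert (S' (s_act n i y)) by (unfold S'; rewrite s_inv; auto).
        apply HS' in H. destruct H as [x [Hx Hw]]. exists x. split; auto. simpl.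
        fold (word_act n w x). rewrite Hw. apply s_inv; auto.
      * intros [x [Hx Hw]]. simpl in Hw. fold (word_act n w x) in Hw.
        assert (S' (word_act n w x)) by (apply HS'; exists x; auto).
        unfold S' in H. now rewrite Hw in H.
Qed.

Lemma ex_max (P : Z -> Prop) b U : P b -> (forall y, P y -> y <= U) ->
  exists M, P M /\ forall y, P y -> y <= M.
Proof.
  intros Hb HU.
  assert (forall k : nat, forall b, P b -> U - b <= Z.of_nat k -> exists M, P M /\ forall y, P y -> y <= M).
  { induction k; intros b0 Hb0 Hk.
    - exists b0. split; auto. intros y Hy. pose proof (HU y Hy). pose proof (HU b0 Hb0). lia.
    - destruct (classic (exists y, P y /\ b0 < y)) as [[y [Hy Hlt]]|Hno].
      + apply (IHk y Hy). lia.
      + exists b0. split; auto. intros y Hy. destruct (Z_le_gt_dec y b0); auto.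
        exfalso; apply Hno; exists y; split; auto; lia. }
  apply (H (Z.to_nat (U - b)) b Hb). lia.
Qed.

Definition sabs (l : list Z) := fold_right (fun x acc => Z.abs x + acc) 0 l.

Lemma sabs_in l x : In x l -> Z.abs x <= sabs l.
Proof.
  induction l; simpl. tauto. intros [->|H].
  - assert (0 <= sabs l) by (clear; induction l; simpl; lia). lia.
  - specialize (IHl H). lia.
Qed.

Lemma sabs_nn l : 0 <= sabs l.
Proof. induction l; simpl; lia. Qed.

Lemma closure n (S : Z -> Prop) : (forall b, S b -> S (b - n)) ->
  forall b, S b -> forall k : nat, S (b - n * Z.of_nat k).
Proof.
  intros H b Hb k. induction k. replace (b - n * Z.of_nat 0) with b by lia. auto.
  replace (b - n * Z.of_nat (Datatypes.S k)) with (b - n * Z.of_nat k - n) by lia. auto.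
Qed.

Lemma backward n (hn : 2 <= n) S :
  ((forall b, S b -> S (b - n)) /\
   finite_set (fun b => S b /\ 0 < b) /\
   finite_set (fun b => b < 0 /\ ~ S b)) -> exists a, nice n a S.
Proof.
  intros [H1 [[l2 H2] [l3 H3]]].
  assert (Hex : forall r, exists M, (M mod n = r mod n /\ S M) /\
     forall y, (y mod n = r mod n /\ S y) -> y <= M).
  { intros r. set (L := sabs l3).
    pose proof (sabs_nn l3). pose proof (Z.mod_pos_bound r n ltac:(lia)).
    apply ex_max with (b := r mod n + (-(L+1)) * n) (U := sabs l2).
    - split. rewrite Z_mod_plus_full. apply Z.mod_mod; lia.
      apply NNPP. intros Hn. assert (In (r mod n + (-(L+1)) * n) l3) by (apply H3; split; [nia|auto]).
      apply sabs_in in H4. fold L in H4. nia.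
    - intros y [_ Hy]. pose proof (sabs_nn l2). destruct (Z_le_gt_dec y 0). lia.
      assert (In y l2) by (apply H2; split; auto; lia). apply sabs_in in H5. lia. }
  set (m := fun r => proj1_sig (constructive_indefinite_description _ (Hex r))).
  assert (Hm : forall r, (m r mod n = r mod n /\ S (m r)) /\
     forall y, (y mod n = r mod n /\ S y) -> y <= m r).
  { intros r. unfold m. destruct (constructive_indefinite_description _ (Hex r)). simpl. auto. }
  destruct (main n hn (Datatypes.S (Z.to_nat (sumsq m (Z.to_nat n)))) m S) as [a [w [Hv HS]]].
  - lia.
  - intros r Hr. destruct (Hm r) as [[E _] _]. rewrite E. apply Z.mod_small; lia.
  - intros y. split.
    + intros Hy. destruct (Hm (y mod n)) as [_ Hmax]. apply Hmax. split; auto.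
      rewrite Z.mod_mod; lia.
    + intros Hy. destruct (Hm (y mod n)) as [[E HS] _]. rewrite Z.mod_mod in E by lia.
      set (M := m (y mod n)) in *.
      pose proof (Z.div_mod (M - y) n ltac:(lia)).
      assert ((M - y) mod n = 0).
      { rewrite Zminus_mod, E, Z.sub_diag. apply Z.mod_0_l; lia. }
      rewrite H0 in H. set (q := (M - y) / n) in *.
      assert (0 <= q) by nia.
      replace y with (M - n * Z.of_nat (Z.to_nat q)) by (rewrite Z2Nat.id by lia; lia).
      apply closure; auto.
  - exists a, w. split; auto.
Qed.

Theorem lemma5p1 (n : Z) (hn : 2 <= n) (S : Z -> Prop) :
  (exists a : Z, nice n a S) <->
  ((forall b, S b -> S (b - n)) /\
   finite_set (fun b => S b /\ 0 < b) /\
   finite_set (fun b => b < 0 /\ ~ S b)).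
Proof.
  split.
  - intros [a Ha]. eapply forward; eauto.
  - apply backward; auto.
Qed.
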